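(* Let $\mathcal{H}$ be a set of connected subgraphs of a graph $G$. Then for every $\ell\in\mathbb{N}_0$, either there are more than $\ell$ pairwise vertex-disjoint graphs in $\mathcal{H}$, or there is a set $Q\subseteq V(G)$ with $|Q|\le(\mathrm{tw}(G)+1)\,\ell\log_2(\ell+1)$ such that $G-Q$ contains no graph of $\mathcal{H}$ (i.e. every member of $\mathcal{H}$ meets $Q$).
   Context: Graphs are finite, simple and undirected; $\mathrm{tw}$ denotes treewidth; $\log$ is base 2. *)

(* Defs.v *)
From Stdlib Require Import Reals.
From mathcomp Require Import all_boot.
Set Implicit Arguments. Unset Strict Implicit. Unset Printing Implicit Defensive.

Definition simple_graph (T : finType) (e : rel T) : Prop :=
  symmetric e /\ irreflexive e.

Definition connected_in (T : finType) (r : rel T) (A : {set T}) : Prop :=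
  A != set0 /\
  forall x y, x \in A -> y \in A ->
    connect [rel u v | [&& u \in A, v \in A & r u v]] x y.

Definition subgraph_of (T : finType) (e : rel T)
    (H : {set T} * {set T * T}) : Prop :=
  forall x y, (x, y) \in H.2 -> [&& e x y, x \in H.1 & y \in H.1].

Definition sg_adj (T : finType) (H : {set T} * {set T * T}) : rel T :=
  [rel x y | ((x, y) \in H.2) || ((y, x) \in H.2)].

Definition connected_subgraph (T : finType) (e : rel T)
    (H : {set T} * {set T * T}) : Prop :=
  subgraph_of e H /\ connected_in (sg_adj H) H.1.

Definition is_tree (n : nat) (t : rel 'I_n) : Prop :=
  0 < n /\ symmetric t /\ irreflexive t /\
  (forall i j : 'I_n, connect t i j) /\
  (forall c : seq 'I_n, ~~ (ucycleb t c && (2 < size c))).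

Definition tree_decomposition (T : finType) (e : rel T) (n : nat)
    (t : rel 'I_n) (B : 'I_n -> {set T}) : Prop :=
  is_tree t /\
  (forall v : T, exists i, v \in B i) /\
  (forall u v : T, e u v -> exists i, (u \in B i) && (v \in B i)) /\
  (forall v : T, connected_in t [set i | v \in B i]).

Definition has_td_bagsize (T : finType) (e : rel T) (k : nat) : Prop :=
  exists n (t : rel 'I_n) (B : 'I_n -> {set T}),
    tree_decomposition e t B /\ forall i, #|B i| <= k.

Lemma has_td_bagsize_exists (T : finType) (e : rel T) :
  exists k, has_td_bagsize e k.
Proof.
exists #|T|, 1, (fun _ _ => false), (fun _ => setT); split; last first.
  by move=> i; rewrite cardsT.
have all0 : forall i j : 'I_1, i = j.
  by move=> [[|?] ?] [[|?] ?] //; apply/val_inj.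
split; [split; [by [] | split; [by [] | split; [by [] | split]]] | split; [|split]].
- by move=> i j; rewrite (all0 i j) connect0.
- by move=> [|a [|b s]].
- by move=> v; exists ord0; rewrite inE.
- by move=> u v _; exists ord0; rewrite !inE.
- move=> v; split.
    by apply/set0Pn; exists ord0; rewrite inE.
  by move=> x y _ _; rewrite (all0 x y) connect0.
Qed.

(* "k = tw(G) + 1": k is the minimum, over all tree decompositions of G, of the
   largest bag size (this minimum exists by has_td_bagsize_exists, and is unique). *)
Definition is_tw_plus1 (T : finType) (e : rel T) (k : nat) : Prop :=
  has_td_bagsize e k /\ forall k', has_td_bagsize e k' -> k <= k'.

Definition log2 (x : R) : R := Rdiv (ln x) (ln (INR 2)).

(* Main.v *)
Require Import Defs.
From Stdlib Require Import Reals Lra Classical.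
From mathcomp Require Import all_boot.
Set Implicit Arguments. Unset Strict Implicit. Unset Printing Implicit Defensive.

Definition tab (n : nat) (t : rel 'I_n) (a b : 'I_n) : rel 'I_n :=
  [rel x y | t x y && ~~ (((x == a) && (y == b)) || ((x == b) && (y == a)))].
Definition side (n : nat) (t : rel 'I_n) (a b : 'I_n) : {set 'I_n} :=
  [set x | connect (tab t a b) b x].

Lemma side_b n (t : rel 'I_n) a b : b \in side t a b.
Proof. by rewrite inE connect0. Qed.

Lemma F1 n (t : rel 'I_n) (Ht : is_tree t) a b : t a b -> a \notin side t a b.
Proof.
case: Ht => _ [tsym [tirr [_ tacyc]]] tab_.
apply/negP; rewrite inE => /connectP [p pp Ea].
case: (shortenP pp) Ea => p' pp' up' _ Ea {pp}.
apply: (negP (tacyc (b :: p'))); apply/andP; split; last first.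
  case: p' pp' up' Ea => [|y [|z q]] //=.
    by move=> _ _ Eab; move: tab_; rewrite Eab tirr.
  rewrite andbT => /andP [_] + _ Ea; rewrite Ea !eqxx orbT //.
rewrite /ucycleb up' andbT /= rcons_path -Ea tab_ andbT.
by apply: sub_path pp' => x y /= /andP [].
Qed.

Lemma F2 n (t : rel 'I_n) a b (S : {set 'I_n}) :
  connected_in t S -> forall x y, x \in S -> y \in S ->
  x \in side t a b -> y \notin side t a b -> (a \in S) && (b \in S).
Proof.
case=> _ Sc x y xS yS xs ys.
move: (Sc x y xS yS) => /connectP [p pp Ey].
elim: p x xS xs pp Ey => [|z p IH] x xS xs /=; first by move=> _ Ey; move: ys; rewrite Ey xs.
case/andP=> /and3P [_ zS txz] pp Ey.
have [zs|zs] := boolP (z \in side t a b); first exact: IH zs pp Ey.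
have : ~~ tab t a b x z.
  apply/negP => H; move: zs; rewrite inE; move: xs; rewrite inE => xs.
  by rewrite (connect_trans xs (connect1 H)).
rewrite /tab /= txz /= negbK => /orP [] /andP [/eqP Exa /eqP Ezb].
  by move: zs; rewrite Ezb side_b.
by rewrite -Exa -Ezb xS zS.
Qed.

Lemma F3 n (t : rel 'I_n) a b (S : {set 'I_n}) :
  connected_in t S -> S \subset side t a b -> b \notin S ->
  exists c, [/\ t b c, c != a & S \subset side t b c].
Proof.
move=> Sconn Ssub bS.
case: (Sconn) => /set0Pn [x xS] _.
have := subsetP Ssub x xS; rewrite inE => /connectP [p pp Ex].
case: (shortenP pp) Ex => p' pp' up' _ Ex {pp}.
case: p' pp' up' Ex => [|c q] /=.
  by move=> _ _ Ex; move: bS; rewrite -Ex xS.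
case/andP => /andP [tbc] + pq.
rewrite eqxx /= => nca /and3P [+ _ _] Ex.
rewrite inE negb_or => /andP [bc bq].
have ca : c != a by apply: contra nca => /eqP ->; rewrite eqxx orbT.
exists c; split => //.
have xsc : x \in side t b c.
  rewrite inE Ex; apply/connectP; exists q => //.
  apply: (@sub_in_path _ [pred z | z != b]) pq.
    move=> u v /= ub vb /andP [tuv _]; rewrite /tab /= tuv /=.
    by rewrite (negbTE ub) (negbTE vb) /= andbF.
  by rewrite /= eq_sym bc /=; apply/allP => z zq /=; apply: contra bq => /eqP <-.
apply/subsetP => y yS; apply/negPn/negP => ys.
by move: (F2 Sconn xS yS xsc ys) => /andP [H _]; move: bS; rewrite H.
Qed.

Lemma F4 n (t : rel 'I_n) (Ht : is_tree t) a b c :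
  (a = b \/ t a b) -> t b c -> c != a -> side t b c \proper side t a b.
Proof.
move=> hab tbc ca.
have Ht' := Ht; case: Ht' => _ [tsym [tirr _]].
have nb : forall z, connect (tab t b c) c z -> z != b.
  move=> z cz; apply/negP => /eqP Ez; rewrite Ez in cz; have := F1 Ht tbc.
  by rewrite inE cz.
have na : forall z, connect (tab t b c) c z -> z != a.
  move=> z cz; apply/negP => /eqP Ez; case: hab => [Eab|tab_].
    by move: (nb z cz); rewrite Ez Eab eqxx.
  have : tab t b c a b.
    rewrite /tab /= tab_ /=; rewrite (eq_sym a c) (negbTE ca) orbF.
    by apply/negP => /andP [/eqP Eab _]; move: tab_; rewrite Eab tirr.
  move=> H; rewrite Ez in cz; have := nb b (connect_trans cz (connect1 H)).
  by rewrite eqxx.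
have cb : c != b by apply/negP => /eqP Ecb; move: tbc; rewrite Ecb tirr.
apply/properP; split.
  apply/subsetP => x; rewrite !inE => /connectP [p pp ->].
  have tabbc : tab t a b b c.
    by rewrite /tab /= tbc /= (negbTE cb) (negbTE ca) !andbF.
  apply: (connect_trans (connect1 tabbc)); apply/connectP; exists p => //.
  have Hall : all [pred z | connect (tab t b c) c z] (c :: p).
    apply/allP => z zp; exact: (path_connect pp zp).
  apply: (@sub_in_path _ [pred z | connect (tab t b c) c z] _ _ _ c p Hall pp).
  move=> u v /= cu cv /andP [tuv _]; rewrite /tab /= tuv /=.
  by rewrite (negbTE (na u cu)) (negbTE (nb u cu)).
exists b; first exact: side_b.
by apply/negP; rewrite inE => /(nb b); rewrite eqxx.
Qed.

Lemma key n (t : rel 'I_n) (Ht : is_tree t) (I : Type) (Fm : I -> Prop)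
  (f : I -> {set 'I_n}) (Fc : forall i, Fm i -> connected_in t (f i))
  (i1 : I) (Fi1 : Fm i1) :
  exists i0 v, [/\ Fm i0, v \in f i0 &
    forall i, Fm i -> f i :&: f i0 != set0 -> v \in f i].
Proof.
have Ht' := Ht; case: Ht' => _ [tsym [tirr [tconn _]]].
suff main : forall m a b, #|side t a b| <= m -> (a = b \/ t a b) ->
    (exists i, Fm i /\ f i \subset side t a b) ->
    exists i0 v, [/\ Fm i0, v \in f i0 &
      forall i, Fm i -> f i :&: f i0 != set0 -> v \in f i].
  case: (Fc i1 Fi1) => /set0Pn [b0 _] _.
  apply: (main _ b0 b0 (leqnn _) (or_introl erefl)).
  exists i1; split => //; apply/subsetP => x _; rewrite inE.
  have E : tab t b0 b0 =2 t.
    move=> u v; rewrite /tab /= orbb; case tuv: (t u v) => //=.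
    apply/negP => /andP [/eqP Eu /eqP Ev]; move: tuv; rewrite Eu Ev tirr.
    by [].
  by rewrite (eq_connect E); apply: tconn.
elim=> [|m IH] a b.
  by rewrite leqn0 => /eqP /cards0_eq Hs; move: (side_b t a b); rewrite Hs inE.
move=> Hm hab [i0 [Fi0 sub0]].
case: (classic (exists c, [/\ t b c, c != a &
           exists i, Fm i /\ f i \subset side t b c])) => [[c [tbc ca ex]]|nex].
  apply: (IH b c _ (or_intror tbc) ex).
  by rewrite -ltnS; apply: leq_trans (proper_card (F4 Ht hab tbc ca)) Hm.
have bin : forall i, Fm i -> f i \subset side t a b -> b \in f i.
  move=> i Fi sub; apply/negPn/negP => bi.
  case: (F3 (Fc i Fi) sub bi) => c [tbc ca subc].
  by apply: nex; exists c; split => //; exists i.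
exists i0, b; split => //; first exact: bin.
move=> i Fi /set0Pn [x]; rewrite inE => /andP [xi xi0].
have [sub|nsub] := boolP (f i \subset side t a b); first exact: bin.
case/subsetPn: nsub => y yi ys.
by case/andP: (F2 (Fc i Fi) xi yi (subsetP sub0 x xi0) ys).
Qed.

Lemma connect_mono_in (T : finType) (r : rel T) (A A' : {set T}) x y :
  A \subset A' ->
  connect [rel u v | [&& u \in A, v \in A & r u v]] x y ->
  connect [rel u v | [&& u \in A', v \in A' & r u v]] x y.
Proof.
move=> sub; apply: connect_sub => u v /= /and3P [uA vA ruv].
by apply: connect1; rewrite /= (subsetP sub _ uA) (subsetP sub _ vA).
Qed.

Lemma Th_conn (T : finType) (e : rel T) n (t : rel 'I_n) (B : 'I_n -> {set T})
  (TD : tree_decomposition e t B) (h : {set T} * {set T * T})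
  (hc : connected_subgraph e h) :
  connected_in t [set i | h.1 :&: B i != set0].
Proof.
case: TD => _ [cov [edg bconn]].
case: hc => hsub [/set0Pn [u uh] hconn].
set Th := [set i | h.1 :&: B i != set0].
have subv : forall v, v \in h.1 -> [set i | v \in B i] \subset Th.
  move=> v vh; apply/subsetP => i; rewrite !inE => vi.
  by apply/set0Pn; exists v; rewrite inE vh.
split.
  case: (cov u) => i ui; apply/set0Pn; exists i; apply: (subsetP (subv u uh)).
  by rewrite inE.
move=> i j; rewrite !inE => /set0Pn [x]; rewrite inE => /andP [xh xi].
move=> /set0Pn [y]; rewrite inE => /andP [yh yj].
move: (hconn x y xh yh) => /connectP [p pp Ey].
elim: p x xh i xi pp Ey => [|z p IH] x xh i' xi' /=.
  move=> _ Ey; rewrite Ey in yj.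
  case: (bconn x) => _ Hb.
  apply: (connect_mono_in (subv x xh)); apply: Hb; by rewrite inE.
case/andP=> /and3P [_ zh adj] pp Ey.
have [l /andP [xl zl]] : exists l, (x \in B l) && (z \in B l).
  case/orP: adj => [H|H]; first by case/and3P: (hsub _ _ H) => /edg.
  case/and3P: (hsub _ _ H) => /edg [l /andP [zl xl]] _ _.
  by exists l; rewrite xl zl.
apply: (connect_trans _ (IH z zh l zl pp Ey)).
case: (bconn x) => _ Hb.
apply: (connect_mono_in (subv x xh)); apply: Hb; by rewrite inE.
Qed.

Lemma main_nat (T : finType) (e : rel T) n (t : rel 'I_n) (B : 'I_n -> {set T})
  (TD : tree_decomposition e t B) (k : nat) (Hb : forall i, #|B i| <= k)
  (H : {set {set T} * {set T * T}})
  (Hconn : forall h, h \in H -> connected_subgraph e h) (l : nat) :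
  forall F : {set {set T} * {set T * T}}, F \subset H ->
  (exists S : {set {set T} * {set T * T}},
      [/\ S \subset F, l < #|S| &
          forall h1 h2, h1 \in S -> h2 \in S -> h1 != h2 -> [disjoint h1.1 & h2.1]])
  \/
  (exists Q : {set T}, #|Q| <= k * l /\ forall h, h \in F -> h.1 :&: Q != set0).
Proof.
have Ht : is_tree t by case: TD.
have cov : forall v : T, exists i, v \in B i by case: TD => _ [].
set Th := fun h : {set T} * {set T * T} => [set i | h.1 :&: B i != set0].
elim: l => [|l IH] F FH.
  have [F0|/set0Pn [h1 h1F]] := eqVneq F set0.
    by right; exists set0; rewrite cards0; split => // h; rewrite F0 inE.
  left; exists [set h1]; rewrite cards1; split => //.
    by rewrite sub1set.
  by move=> h2 h3; rewrite !inE => /eqP -> /eqP ->; rewrite eqxx.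
have [F0|/set0Pn [h1 h1F]] := eqVneq F set0.
  by right; exists set0; rewrite cards0; split => // h; rewrite F0 inE.
have Fc : forall h, h \in F -> connected_in t (Th h).
  move=> h hF; apply: (Th_conn TD); apply: Hconn; exact: (subsetP FH).
case: (@key _ t Ht _ (fun h => h \in F) Th Fc h1 h1F) => h0 [v [h0F vh0 Hv]].
set F' := [set h in F | h.1 :&: B v == set0].
have F'F : F' \subset F by apply/subsetP => h; rewrite inE => /andP [].
case: (IH F' (subset_trans F'F FH)) => [[S' [S'F' lS' dS']]|[Q' [cQ' hQ']]].
  left; exists (h0 |: S').
  have h0S' : h0 \notin S'.
    apply/negP => /(subsetP S'F'); rewrite inE => /andP [_ E].
    by move: vh0; rewrite inE E.
  have disj0 : forall h, h \in S' -> [disjoint h.1 & h0.1].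
    move=> h hS; rewrite -setI_eq0; apply/negPn/negP => /set0Pn [u].
    rewrite inE => /andP [uh uh0]; case: (cov u) => i ui.
    have hF' := subsetP S'F' h hS; move: (hF'); rewrite inE => /andP [hF E].
    have : v \in Th h.
      apply: Hv => //; apply/set0Pn; exists i; rewrite !inE.
      by apply/andP; split; apply/set0Pn; exists u; rewrite inE ?uh ?uh0 ui.
    by rewrite inE E.
  split.
  - by rewrite subUset sub1set h0F (subset_trans S'F' F'F).
  - by rewrite cardsU1 h0S'.
  - move=> a b; rewrite !inE => /orP [/eqP ->|aS] /orP [/eqP ->|bS].
    + by rewrite eqxx.
    + by move=> _; rewrite disjoint_sym; apply: disj0.
    + by move=> _; apply: disj0.
    + exact: dS'.
right; exists (B v :|: Q'); split.
  rewrite mulnS; apply: leq_trans (leq_add (Hb v) cQ').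
  by rewrite -cardsUI leq_addr.
move=> h hF.
have [E|E] := boolP (h.1 :&: B v == set0).
  have : h \in F' by rewrite inE hF E.
  move/hQ'; apply: contra => /eqP E2; apply/eqP; apply/setP => x.
  have := f_equal (fun A : {set T} => x \in A) E2; rewrite !inE.
  by case: (x \in h.1) => //=; case: (x \in Q') => //; rewrite orbT.
apply: contra E => /eqP E2; apply/eqP; apply/setP => x.
have := f_equal (fun A : {set T} => x \in A) E2; rewrite !inE.
by case: (x \in h.1) => //=; case: (x \in B v).
Qed.
Unset Implicit Arguments.

Lemma real_bound (q k l : nat) : (q <= k * l)%N ->
  Rle (INR q) (Rmult (Rmult (INR k) (INR l)) (log2 (INR l.+1))).
Proof.
move=> hq.
have hq' : Rle (INR q) (Rmult (INR k) (INR l)).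
  by rewrite -mult_INR; apply: le_INR; apply/leP.
case: l hq hq' => [|l] hq hq'.
  by rewrite /= Rmult_0_r Rmult_0_l; move: hq'; rewrite /= Rmult_0_r.
have l2 : Rle 1 (log2 (INR l.+2)).
  have ln2 : Rlt 0 (ln (INR 2)).
    rewrite -ln_1; apply: ln_increasing; rewrite /=; lra.
  have h2 : Rle (INR 2) (INR l.+2) by apply: le_INR; apply/leP.
  have : Rle (ln (INR 2)) (ln (INR l.+2)).
    case: h2 => [h2|->]; last by apply: Rle_refl.
    by left; apply: ln_increasing => //; rewrite /=; lra.
  rewrite /log2 => H.
  apply (Rmult_le_reg_r (ln (INR 2))) => //.
  rewrite /Rdiv Rmult_assoc Rinv_l; lra.
have hk : Rle 0 (Rmult (INR k) (INR l.+1)).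
  apply: Rmult_le_pos; apply: pos_INR.
nra.
Qed.

Theorem lemma5p2 (T : finType) (e : rel T) (HG : simple_graph e)
    (H : {set {set T} * {set T * T}})
    (Hconn : forall h, h \in H -> connected_subgraph e h)
    (k : nat) (Hk : is_tw_plus1 e k) (l : nat) :
  (exists S : {set {set T} * {set T * T}},
      [/\ S \subset H, l < #|S| &
          forall h1 h2, h1 \in S -> h2 \in S -> h1 != h2 -> [disjoint h1.1 & h2.1]])
  \/
  (exists Q : {set T},
      Rle (INR #|Q|) (Rmult (Rmult (INR k) (INR l)) (log2 (INR l.+1))) /\
      forall h, h \in H -> h.1 :&: Q != set0).
Proof.
case: Hk => [[n [t [B [TD Hb]]]] _].
case: (main_nat TD Hb Hconn l (subxx H)) => [L|[Q [cQ hQ]]]; first by left.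
by right; exists Q; split => //; apply: real_bound.
Qed.
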